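(* Let $G=(Q,\Sigma,\delta_G,q_0,Q_m)$ be a DFA, $\Sigma_o$ a subset of $\Sigma$, and $H:=T_{\Sigma_o}(G)$. Then $match_{\Sigma_o}=eq(G\,\|\,H)$ as binary relations on $\Sigma^*$.
   Context: For a DFA $K$ with initial state $k_0$ and alphabet $\Sigma$, the equiresponse relation $eq(K)$ on $\Sigma^*$ is: $s\equiv s'\bmod eq(K)$ iff $\delta_K(k_0,s)=\delta_K(k_0,s')$, where if $\delta_K(k_0,s)$ is undefined the equality holds iff $\delta_K(k_0,s')$ is also undefined. $P_{\Sigma_o}$ is the natural projection onto $\Sigma_o^*$. The observer $H=T_{\Sigma_o}(G)$ is the DFA over $\Sigma_o$ with subset states, initial state $A_0=\epsilon R_G(q_0)$ (where $\epsilon R_G(q)=\{\delta_G(q,s):P_{\Sigma_o}(s)=\epsilon\}$), transitions $\delta_H(B,\sigma)=\bigcup_{q\in B,\ \delta_G(q,\sigma)\text{ defined}}\epsilon R_G(\delta_G(q,\sigma))$ (defined iff nonempty). $G\,\|\,H$ is the accessible part of the automaton over $\Sigma$ with states $(q,A)$, initial state $(q_0,A_0)$, transitions $((q,A),\sigma)\mapsto(\delta_G(q,\sigma),\delta_H(A,\sigma))$ for $\sigma\in\Sigma_o$ and $((q,A),\sigma)\mapsto(\delta_G(q,\sigma),A)$ for $\sigma\in\Sigma\setminus\Sigma_o$. The relation $match_{\Sigma_o}$ on $\Sigma^*$: $(s,s')\in match_{\Sigma_o}$ iff $s\equiv s'\bmod eq(G)$ and $P_{\Sigma_o}(s)\equiv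 P_{\Sigma_o}(s')\bmod eq(H)$; moreover, if $s\notin L(G)$ then $(s,s')\in match_{\Sigma_o}$ iff $s'\notin L(G)$. *)

(* Defs.v *)
From mathcomp Require Import all_boot.
From Stdlib Require Import ClassicalDescription.
Set Implicit Arguments. Unset Strict Implicit. Unset Printing Implicit Defensive.

Fixpoint ext (S T : Type) (d : S -> T -> option S) (x : S) (s : seq T)
  : option S :=
  match s with
  | [::] => Some x
  | a :: s' => match d x a with Some y => ext d y s' | None => None end
  end.

(* Equiresponse relation eq(K) of an automaton with transition d and initial
   state x0: s == s' mod eq(K) iff delta(x0,s) = delta(x0,s') (as options,
   so "both undefined" counts as equal). *)
Definition eqresp (S T : Type) (d : S -> T -> option S) (x0 : S)
  (s s' : seq T) : Prop := ext d x0 s = ext d x0 s'.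

Definition natproj (Sigma : finType) (So : {set Sigma}) (s : seq Sigma)
  : seq Sigma := [seq a <- s | a \in So].

Definition epsR (Q Sigma : finType) (So : {set Sigma})
  (d : Q -> Sigma -> option Q) (q : Q) : Q -> Prop :=
  fun q' => exists s, natproj So s = [::] /\ ext d q s = Some q'.

(* Observer T_{Sigma_o}(G): states are subsets of Q (as predicates). *)
Definition obs_init (Q Sigma : finType) (So : {set Sigma})
  (d : Q -> Sigma -> option Q) (q0 : Q) : Q -> Prop := epsR So d q0.

Definition obs_delta (Q Sigma : finType) (So : {set Sigma})
  (d : Q -> Sigma -> option Q) (B : Q -> Prop) (a : Sigma)
  : option (Q -> Prop) :=
  let B' := fun q' => exists q p, B q /\ d q a = Some p /\ epsR So d p q' in
  if excluded_middle_informative (exists q', B' q') then Some B' else None.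

Definition par_delta (Q Sigma : finType) (So : {set Sigma})
  (d : Q -> Sigma -> option Q) (x : Q * (Q -> Prop)) (a : Sigma)
  : option (Q * (Q -> Prop)) :=
  if a \in So then
    match d x.1 a, obs_delta So d x.2 a with
    | Some q, Some A => Some (q, A)
    | _, _ => None
    end
  else
    match d x.1 a with Some q => Some (q, x.2) | None => None end.

Definition par_init (Q Sigma : finType) (So : {set Sigma})
  (d : Q -> Sigma -> option Q) (q0 : Q) : Q * (Q -> Prop) :=
  (q0, obs_init So d q0).

Definition inL (Q Sigma : finType) (d : Q -> Sigma -> option Q) (q0 : Q)
  (s : seq Sigma) : Prop := ext d q0 s <> None.

Definition match_rel (Q Sigma : finType) (So : {set Sigma})
  (d : Q -> Sigma -> option Q) (q0 : Q) (s s' : seq Sigma) : Prop :=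
  (inL d q0 s ->
     eqresp d q0 s s' /\
     eqresp (obs_delta So d) (obs_init So d q0) (natproj So s) (natproj So s'))
  /\ (~ inL d q0 s -> ~ inL d q0 s').

(* Main.v *)
Require Import Defs.
From mathcomp Require Import all_boot.
From Stdlib Require Import ClassicalDescription.

Lemma ext_par (Q Sigma : finType) (So : {set Sigma}) (d : Q -> Sigma -> option Q) :
  forall s q A, ext (par_delta So d) (q, A) s =
    match ext d q s, ext (obs_delta So d) A (natproj So s) with
    | Some q', Some A' => Some (q', A') | _, _ => None end.
Proof.
elim=> [|a s IH] q A //=.
case Hp: (par_delta So d (q, A) a) => [[q1 A1]|]; rewrite ?IH;
move: Hp; rewrite /par_delta /natproj /=;
case: (a \in So) => /=;
case: (d q a) => [q2|] //=; try case: (obs_delta So d A a) => [A2|] //=;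
try (by case=> <- <-); by case: (ext d q2 _) => //.
Qed.

Lemma inv (Q Sigma : finType) (So : {set Sigma}) (d : Q -> Sigma -> option Q) :
  forall s q A q', (forall r, epsR So d q r -> A r) -> ext d q s = Some q' ->
    exists A', ext (obs_delta So d) A (natproj So s) = Some A' /\ A' q'.
Proof.
elim=> [|a s IH] q A q' HA /=.
  move=> [<-]; exists A; split => //; apply: HA; by exists [::].
rewrite /natproj /=.
case Hq: (d q a) => [p|] // Hs.
case Ha: (a \in So) => /=.
  rewrite /obs_delta.
  set B' := (fun q'0 => exists q1 p0, A q1 /\ d q1 a = Some p0 /\ epsR So d p0 q'0).
  case: excluded_middle_informative => [_|Hn] /=.
    apply: (IH p B' q') => // r [t [Ht1 Ht2]].
    exists q, p; split; first by apply: HA; exists [::].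
    split => //; by exists t.
  exfalso; apply: Hn; exists p; exists q, p; split; first by apply: HA; exists [::].
  split => //; by exists [::].
apply: (IH p A q') => // r [t [Ht1 Ht2]].
apply: HA; exists (a :: t); split; first by rewrite /natproj /= Ha.
by rewrite /= Hq.
Qed.

Theorem lemma4 (Q Sigma : finType) (delta : Q -> Sigma -> option Q) (q0 : Q)
  (Qm : {set Q}) (So : {set Sigma}) :
  forall s s' : seq Sigma,
    match_rel So delta q0 s s' <->
    eqresp (par_delta So delta) (par_init So delta q0) s s'.
Proof.
have key : forall s, ext delta q0 s <> None ->
    ext (obs_delta So delta) (obs_init So delta q0) (natproj So s) <> None.
  move=> s; case E: (ext delta q0 s) => [q'|] // _.
  have [A' [-> _]] := @inv Q Sigma So delta s q0 (obs_init So delta q0) q' (fun r H => H) E.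
  by [].
move=> s s'; rewrite /match_rel /eqresp /inL /par_init !ext_par.
move: (key s) (key s').
case: (ext delta q0 s) => [q|]; case: (ext (obs_delta So delta) (obs_init So delta q0) (natproj So s)) => [A|];
case: (ext delta q0 s') => [q'|]; case: (ext (obs_delta So delta) (obs_init So delta q0) (natproj So s')) => [A'|] => k k';
try (exfalso; apply: (k _ erefl); discriminate);
try (exfalso; apply: (k' _ erefl); discriminate).
all: split; [case=> H1 H2 | move=> E; split].
all: try (have [] := H1 ltac:(discriminate)); try congruence.
all: try (move=> [] -> ->; done).
all: try (move=> _; split; congruence).
all: try (move=> H; exfalso; apply: H; done).
all: try (have := H2 ltac:(by apply)); try (by move=> X; exfalso; apply: X).
all: try (move=> ? ?; congruence).
all: try done.
Qed.
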